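(* Let $\hat{r}^{\mathsf{mom}}_n$ be the median-of-means estimate of the regression function $r$ constructed on $m$ blocks with an arbitrary base estimate $\hat{r}_N$. Then for all $x\in\mathbb{R}^d$ and all $t\geq 0$, \[ \mathbb{P}\left(\left|\hat{r}^{\mathsf{mom}}_n(x)-r(x)\right|\geq t\right)\leq 2^m\, p_t(x)^{m/2}, \qquad\text{where } p_t(x):=\mathbb{P}\left(\left|\hat{r}_N(x)-r(x)\right|\geq t\right), \] and $\hat{r}_N(x)=\hat{r}_N(x,\mathcal{D}_N)$ denotes the base estimate computed on an i.i.d. sample $\mathcal{D}_N$ of size $N$ with the law of $(X,Y)$.
   Context: Let $(X,Y)$ be a random pair with $X\in\mathbb{R}^d$ ($d\geq1$) of law $\mu$ and $Y$ real-valued with $\mathbb{E}[Y^2]<\infty$; the regression function is $r(x)=\mathbb{E}[Y\mid X=x]$. Let $\mathcal{D}_n=((X_1,Y_1),\dots,(X_n,Y_n))$ be i.i.d. copies of $(X,Y)$. For $m\in\{1,\dots,n\}$, let $N=\lfloor n/m\rfloor$ and let $\mathcal{D}^{(1)},\dots,\mathcal{D}^{(m)}$ be $m$ disjoint subsets of $\mathcal{D}_n$, each consisting of $N$ observations (remaining observations are discarded). A base estimate is a map $\hat{r}_N(x,\cdot)$ taking a sample of size $N$ and returning a real number; set $\hat{r}^{(j)}(x)=\hat{r}_N(x,\mathcal{D}^{(j)})$. The median-of-means estimate is $\hat{r}^{\mathsf{mom}}_n(x)=\mathsf{median}(\hat{r}^{(1)}(x),\dots,\hat{r}^{(m)}(x))$,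 where $\mathsf{median}(r_1,\dots,r_m)=r_{(\lceil m/2\rceil)}$ is the $\lceil m/2\rceil$-th smallest of the values. *)

(* Defs.v *)
From HB Require Import structures.
From mathcomp Require Import all_boot all_order all_algebra.
From mathcomp Require Import all_classical all_reals all_analysis.
Set Implicit Arguments. Unset Strict Implicit. Unset Printing Implicit Defensive.
Import Order.TTheory GRing.Theory Num.Theory.
Import numFieldNormedType.Exports.
Local Open Scope classical_set_scope.
Local Open Scope ring_scope.

Definition obs (R : realType) (d : nat) := (d.-tuple R * R)%type.

Section defs.
Context {R : realType} {dT : measure_display} {T : measurableType dT}.
Variable P : probability T R.

Definition mutually_independent {dS} {S : measurableType dS} (k : nat)
  (Z : 'I_k -> T -> S) : Prop :=
  forall A : 'I_k -> set S, (forall i, measurable (A i)) ->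
    P (\bigcap_(i in [set: 'I_k]) (Z i @^-1` A i)) =
    (\prod_(i < k) P (Z i @^-1` A i))%E.

Definition same_law {dS} {S : measurableType dS} (U V : T -> S) : Prop :=
  forall A : set S, measurable A -> P (U @^-1` A) = P (V @^-1` A).

Definition iid_copies {dS} {S : measurableType dS} (k : nat)
  (Z : 'I_k -> T -> S) (V : T -> S) : Prop :=
  (forall i, measurable_fun setT (Z i)) /\ mutually_independent Z /\
  (forall i, same_law (Z i) V).

(* r is (a version of) the regression function x |-> E[Y | X = x] *)
Definition is_regression_function (d : nat) (XY : T -> obs R d)
  (r : d.-tuple R -> R) : Prop :=
  measurable_fun setT r /\
  P.-integrable setT (fun w => (XY w).2%:E) /\
  forall B : set (d.-tuple R), measurable B ->
    (\int[P]_(w in (fun w => (XY w).1) @^-1` B) ((XY w).2)%:E =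
     \int[P]_(w in (fun w => (XY w).1) @^-1` B) (r (XY w).1)%:E)%E.
End defs.

(* median(r_1,...,r_m) = r_(ceil(m/2)), the ceil(m/2)-th smallest value *)
Definition median {R : realType} (s : seq R) : R :=
  nth 0 (sort <=%R s) (uphalf (size s)).-1.

Definition mom {R : realType} {T : Type} (d m N : nat)
  (rN : d.-tuple R -> N.-tuple (obs R d) -> R)
  (D : 'I_m -> T -> N.-tuple (obs R d)) (x : d.-tuple R) (w : T) : R :=
  median [seq rN x (D j w) | j <- enum 'I_m].

(* Main.v *)
Require Import Defs.
From HB Require Import structures.
From mathcomp Require Import all_boot all_order all_algebra.
From mathcomp Require Import all_classical all_reals all_analysis.
From mathcomp Require Import zify ring lra.
Unset Printing Implicit Defensive.
Import Order.TTheory GRing.Theory Num.Theory.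
Import numFieldNormedType.Exports.
Local Open Scope classical_set_scope.
Local Open Scope ring_scope.

Definition rect {dS} {S : measurableType dS} {N} (A : 'I_N -> set S) : set (N.-tuple S) :=
  [set z | forall k, A k (tnth z k)].
Definition rects {dS} (S : measurableType dS) N : set (set (N.-tuple S)) :=
  [set X | exists2 A : 'I_N -> set S, (forall k, measurable (A k)) & X = rect A].

Lemma rect_measurable {dS} {S : measurableType dS} {N} (A : 'I_N -> set S) :
  (forall k, measurable (A k)) -> measurable (rect A).
Proof.
move=> mA.
have -> : rect A = \bigcap_(k in [set: 'I_N]) ((@tnth N S)^~ k @^-1` A k).
  by apply/seteqP; split => z H k => [_|]; [exact: H|exact: H k I].
apply: fin_bigcap_measurable => // k _; rewrite -[X in measurable X]setTI; exact: measurable_tnth.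
Qed.

Lemma rects_gen {dS} (S : measurableType dS) N :
  @measurable _ (N.-tuple S) = <<s rects S N >>.
Proof.
apply/seteqP; split.
  apply: smallest_sub; first exact: smallest_sigma_algebra.
  case: N => [|N]; first by rewrite big_ord0.
  rewrite -bigcup_mkord_ord; apply: bigcup_sub => i Ii.
  move=> X [B mB <-]; apply: sub_sigma_algebra.
  exists (fun k => if k == inord i then B else setT).
    by move=> k; case: ifP.
  apply/seteqP; split => z /=.
    by move=> [_ Bz] k; case: ifPn => // /eqP ->.
  by move=> /(_ (inord i)); rewrite eqxx.
apply: smallest_sub; first exact: sigma_algebra_measurable.
by move=> X [A mA ->]; exact: rect_measurable.
Qed.

Lemma rects_setI {dS} (S : measurableType dS) N : setI_closed (rects S N).
Proof.
move=> X Y [A mA ->] [B mB ->]; exists (fun k => A k `&` B k).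
  by move=> k; exact: measurableI.
by apply/seteqP; split => z /=; [move=> [H1 H2] k; split|move=> H; split => k; case: (H k)].
Qed.

Lemma rects_setT {dS} (S : measurableType dS) N : rects S N setT.
Proof. by exists (fun=> setT) => //; apply/seteqP; split. Qed.

Lemma tuple_measure_unique {dS} (S : measurableType dS) N (R : realType)
  (mu nu : {measure set (N.-tuple S) -> \bar R}) :
  (forall X, rects S N X -> mu X = nu X) -> (mu setT < +oo)%E ->
  forall X, measurable X -> mu X = nu X.
Proof.
move=> Hr Hfin X mX.
apply: (measure_unique (rects S N) (fun=> setT)) => //.
- exact: rects_gen.
- exact: rects_setI.
- by move=> _; exact: rects_setT.
- by rewrite bigcup_const.
Qed.

Lemma base_indep (R : realType) (dT : measure_display) (T : measurableType dT)
  (P : probability T R) {dS} (S : measurableType dS) (n m N : nat)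
  (Z : 'I_n -> T -> S) (V : T -> S) (W : 'I_N -> T -> S)
  (blk : 'I_m -> 'I_N -> 'I_n) :
  iid_copies P Z V -> iid_copies P W V ->
  (forall j k j' k', blk j k = blk j' k' -> j = j' /\ k = k') ->
  forall A : 'I_m -> 'I_N -> set S, (forall j k, measurable (A j k)) ->
  P (\bigcap_(j in [set: 'I_m]) ((fun w => [tuple Z (blk j k) w | k < N]) @^-1` rect (A j))) =
  (\prod_(j < m) P ((fun w => [tuple W k w | k < N]) @^-1` rect (A j)))%E.
Proof.
move=> [mZ [iZ lZ]] [mW [iW lW]] binj A mA.
pose h (jk : 'I_m * 'I_N) := blk jk.1 jk.2.
have hinj : injective h by move=> [j k] [j' k'] /binj [/= -> ->].
pose A' (i : 'I_n) := if [pick jk | h jk == i] is Some jk then A jk.1 jk.2 else setT.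
have mA' i : measurable (A' i) by rewrite /A'; case: pickP.
have A'h jk : A' (h jk) = A jk.1 jk.2.
  rewrite /A'; case: pickP => [jk' /eqP /hinj -> //|/(_ jk)]; by rewrite eqxx.
pose g (B : set S) := P (V @^-1` B).
have -> : \bigcap_(j in [set: 'I_m]) ((fun w => [tuple Z (blk j k) w | k < N]) @^-1` rect (A j))
    = \bigcap_(i in [set: 'I_n]) (Z i @^-1` A' i).
  apply/seteqP; split => w /= H.
    move=> i _; rewrite /A'; case: pickP => // -[j k] /eqP <-.
    by have := H j I k; rewrite tnth_mktuple.
  move=> j _ k; rewrite tnth_mktuple.
  by have := H (h (j, k)) I; rewrite A'h.
rewrite iZ//.
have -> : (\prod_(i < n) P (Z i @^-1` A' i) = \prod_(i < n) g (A' i))%E.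
  by apply: eq_bigr => i _; rewrite lZ.
have -> : (\prod_(j < m) P ((fun w => [tuple W k w | k < N]) @^-1` rect (A j)) =
    \prod_(j < m) \prod_(k < N) g (A j k))%E.
  apply: eq_bigr => j _.
  have -> : (fun w => [tuple W k w | k < N]) @^-1` rect (A j) = \bigcap_(k in [set: 'I_N]) (W k @^-1` A j k).
    by apply/seteqP; split => w /= H k; [move=> _|]; have := H k; rewrite ?tnth_mktuple; [|move/(_ I)].
  by rewrite iW//; apply: eq_bigr => k _; rewrite lW.
rewrite pair_big /=.
rewrite (bigID (fun i => i \in (h @: [set: 'I_m * 'I_N])%SET)) /=.
rewrite [X in (_ * X)%E]big1 ?mule1; last first.
  move=> i Hi; rewrite /A'; case: pickP => [jk /eqP Hjk|_]; last first.
    by rewrite /g preimage_setT probability_setT.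
  by case/negP: Hi; rewrite -Hjk; apply: imset_f; exact: finset.in_setT.
rewrite big_imset /=; last by move=> x y _ _; exact: hinj.
transitivity (\prod_(i in [set: 'I_m * 'I_N]%SET) g (A i.1 i.2))%E.
  by apply: eq_bigr => x _; rewrite A'h.
by apply: eq_bigl => x; rewrite finset.in_setT.
Qed.

Definition rpush {d d'} {T : measurableType d} {T' : measurableType d'} {R : realType}
  (mu : {measure set T -> \bar R}) {f : T -> T'} {E : set T}
  (mf : measurable_fun setT f) (mE : measurable E) : set T' -> \bar R :=
  fun D => mu (f @^-1` D `&` E).

Section rpush_measure.
Local Open Scope ereal_scope.
Context d d' (T : measurableType d) (T' : measurableType d') (R : realType)
  (mu : {measure set T -> \bar R}) (f : T -> T') (E : set T)
  (mf : measurable_fun setT f) (mE : measurable E).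

Let rpush0 : rpush mu mf mE set0 = 0.
Proof. by rewrite /rpush preimage_set0 set0I measure0. Qed.

Let rpush_ge0 A : 0 <= rpush mu mf mE A.
Proof. exact: measure_ge0. Qed.

Let rpush_sigma_additive : semi_sigma_additive (rpush mu mf mE).
Proof.
move=> F mF tF mUF; rewrite /rpush preimage_bigcup setI_bigcupl.
apply: measure_semi_sigma_additive.
- move=> n; apply: measurableI => //.
  by rewrite -[X in measurable X]setTI; exact: mf.
- apply/trivIsetP => /= i j _ _ ij.
  rewrite setIACA setIid -preimage_setI.
  by move/trivIsetP : tF => /(_ _ _ _ _ ij) ->//; rewrite preimage_set0 set0I.
- rewrite -setI_bigcupl; apply: measurableI => //.
  by rewrite -preimage_bigcup -[X in measurable X]setTI; exact: mf.
Qed.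

HB.instance Definition _ := isMeasure.Build _ _ _
  (rpush mu mf mE) rpush0 rpush_ge0 rpush_sigma_additive.

End rpush_measure.

Lemma mtuple {dT} {T : measurableType dT} {dS} {S : measurableType dS} N
  (Z : 'I_N -> T -> S) : (forall k, measurable_fun setT (Z k)) ->
  measurable_fun setT (fun w => [tuple Z k w | k < N]).
Proof.
move=> mZ; apply/measurable_fun_tnthP => k.
rewrite (_ : _ \o _ = Z k); first exact: mZ.
by apply: funext => w /=; rewrite tnth_mktuple.
Qed.

Lemma full_indep (R : realType) (dT : measure_display) (T : measurableType dT)
  (P : probability T R) {dS} (S : measurableType dS) (n m N : nat)
  (Z : 'I_n -> T -> S) (V : T -> S) (W : 'I_N -> T -> S)
  (blk : 'I_m -> 'I_N -> 'I_n) :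
  iid_copies P Z V -> iid_copies P W V ->
  (forall j k j' k', blk j k = blk j' k' -> j = j' /\ k = k') ->
  forall C : 'I_m -> set (N.-tuple S), (forall j, measurable (C j)) ->
  P (\bigcap_(j in [set: 'I_m]) ((fun w => [tuple Z (blk j k) w | k < N]) @^-1` C j)) =
  (\prod_(j < m) P ((fun w => [tuple W k w | k < N]) @^-1` C j))%E.
Proof.
move=> iidZ iidW binj.
pose F (j : 'I_m) w := [tuple Z (blk j k) w | k < N].
pose G w := [tuple W k w | k < N].
have mF j : measurable_fun setT (F j) by apply: mtuple => k; case: iidZ.
have mG : measurable_fun setT G by apply: mtuple => k; case: iidW.
have mpre (f : T -> N.-tuple S) D : measurable_fun setT f -> measurable D -> measurable (f @^-1` D).
  by move=> mf mD; rewrite -[X in measurable X]setTI; exact: mf.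
change (forall C : 'I_m -> set (N.-tuple S), (forall j, measurable (C j)) ->
  P (\bigcap_(j in [set: 'I_m]) (F j @^-1` C j)) = (\prod_(j < m) P (G @^-1` C j))%E).
suff H : forall a, (a <= m)%N -> forall C : 'I_m -> set (N.-tuple S), (forall j, measurable (C j)) ->
    (forall j : 'I_m, (a <= j)%N -> rects S N (C j)) ->
    P (\bigcap_(j in [set: 'I_m]) (F j @^-1` C j)) = (\prod_(j < m) P (G @^-1` C j))%E.
  by move=> C mC; apply: (H m (leqnn m)) => // j; rewrite leqNgt ltn_ord.
elim=> [_ C mC rC | a IH am C mC rC].
  have /boolp.choice [A HA] : forall j, exists A : 'I_N -> set S, (forall k, measurable (A k)) /\ C j = rect A.
    move=> j.
    by have [A mA ->] := rC j (leq0n _); exists A.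
  have -> : C = fun j => rect (A j) by apply: funext => j; case: (HA j).
  have := base_indep _ _ _ _ _ _ _ _ _ _ _ _ iidZ iidW binj _ (fun j => (HA j).1).
  exact.
pose j0 : 'I_m := Ordinal am.
pose C' D := fun j => if j == j0 then D else C j.
have IHD : forall D, rects S N D ->
    P (\bigcap_(j in [set: 'I_m]) (F j @^-1` C' D j)) = (\prod_(j < m) P (G @^-1` C' D j))%E.
  move=> D rD; apply: IH; first exact: ltnW.
    move=> j; rewrite /C'; case: ifP => _; last exact: mC.
    by case: rD => A mA ->; exact: rect_measurable.
  move=> j aj; rewrite /C'; case: ifPn => // jj0; apply: rC.
  by rewrite ltn_neqAle aj andbT; apply: contra jj0 => /eqP aj0; apply/eqP/val_inj.
pose E := \bigcap_(j in [set j | j != j0]) (F j @^-1` C j).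
have mE : measurable E.
  by apply: fin_bigcap_measurable; [exact: finite_finset|move=> j _; apply: mpre].
have setE D : \bigcap_(j in [set: 'I_m]) (F j @^-1` C' D j) = F j0 @^-1` D `&` E.
  apply/seteqP; split => w /= H.
    split; first by have := H j0 I; rewrite /C' eqxx.
    by move=> j /= jj0; have := H j I; rewrite /C' (negbTE jj0).
  move=> j _; rewrite /C'; case: ifPn => [/eqP ->|jj0]; first by case: H.
  by case: H => _; apply.
have prodE D : (\prod_(j < m) P (G @^-1` C' D j) =
    P (G @^-1` D) * \prod_(j < m | j != j0) P (G @^-1` C j))%E.
  rewrite (bigD1 j0) //= /C' eqxx; congr (_ * _)%E.
  by apply: eq_bigr => j /negbTE ->.
have PE : P E = (\prod_(j < m | j != j0) P (G @^-1` C j))%E.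
  have := IHD setT (rects_setT S N).
  by rewrite setE prodE preimage_setT setTI probability_setT mul1e.
have PEfin : P E \is a fin_num by rewrite fin_num_measure.
have c0 : 0 <= fine (P E) by rewrite fine_ge0 // measure_ge0.
pose mu := rpush P (mF j0) mE.
pose nu := mscale (@NngNum R _ c0) (rpush P mG measurableT).
have key : forall D, measurable D -> mu D = nu D.
  apply: tuple_measure_unique.
    move=> D rD; rewrite /mu /nu /rpush.
    change (P (F j0 @^-1` D `&` E) = (fine (P E))%:E * P (G @^-1` D `&` setT))%E.
    by rewrite fineK // setIT -setE IHD // prodE -PE muleC.
  by rewrite /mu /rpush /= ltey_eq fin_num_measure //; apply: measurableI => //; apply: mpre.
have -> : C = C' (C j0).
  by apply: funext => j; rewrite /C'; case: ifP => // /eqP ->.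
rewrite setE prodE -PE.
have := key (C j0) (mC j0); rewrite /mu /nu /rpush => H.
change (P (F j0 @^-1` C j0 `&` E) = (fine (P E))%:E * P (G @^-1` C j0 `&` setT))%E in H.
by rewrite H fineK // setIT muleC.
Qed.

Lemma cnt_card m (P : pred 'I_m) : #|[set j | P j]%SET| = count P (enum 'I_m).
Proof.
rewrite cardsE cardE -size_filter /enum_mem -filter_predI.
congr size; apply: eq_filter => j /=; by rewrite andbT.
Qed.

Lemma median_up (R : realType) (s : seq R) (p : pred R) :
  (0 < size s)%N -> (forall x y, x <= y -> p x -> p y) ->
  p (median s) = (size s - (uphalf (size s)).-1 <= count p s)%N.
Proof.
move=> s0 pup; rewrite /median.
set q := (uphalf (size s)).-1.
set u := sort <=%R s.
have su : size u = size s by rewrite size_sort.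
have cu : count p u = count p s by apply/permP; rewrite perm_sort.
have sortu : sorted <=%R u by apply: sort_sorted; exact: le_total.
have qs : (q < size s)%N by rewrite /q uphalfE -divn2; lia.
have mono i j : (i <= j < size u)%N -> nth 0 u i <= nth 0 u j.
  move=> /andP[ij js]; apply: (sorted_leq_nth le_trans lexx) => //.
  by rewrite inE (leq_ltn_trans ij js).
rewrite -cu; case Hp: (p (nth 0 u q)).
  have : all p (drop q u).
    apply/(all_nthP 0) => i; rewrite size_drop nth_drop => hi.
    apply: pup Hp; apply: mono; rewrite su in hi *; lia.
  rewrite all_count => /eqP cd.
  rewrite -(cat_take_drop q u) count_cat cd size_drop su; lia.
have c0 : count p (take q.+1 u) = 0.
  apply/eqP; rewrite -leqn0 leqNgt -has_count; apply/hasPn => y /(nthP 0)[i hi <-].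
  rewrite size_takel in hi; last by rewrite su.
  rewrite nth_take //; apply/negP => pi; move/negP: Hp; apply.
  by apply: pup pi; apply: mono; rewrite su; lia.
have hc := count_size p (drop q.+1 u); rewrite size_drop su in hc.
rewrite -[u in count p u](cat_take_drop q.+1 u) count_cat c0 add0n.
apply/esym/negbTE; lia.
Qed.

Lemma meas_count {dT} {T : measurableType dT} (I : Type) (l : seq I) (Q : I -> T -> bool) :
  (forall i, measurable [set w | Q i w]) ->
  forall c, measurable [set w | (c <= count (fun i => Q i w) l)%N].
Proof.
move=> mQ; elim: l => [|i l IH] c /=.
  case: c => [|c].
    by rewrite (_ : [set w | _] = setT) //; apply/seteqP; split.
  by rewrite (_ : [set w | _] = set0) //; apply/seteqP; split.
case: c => [|c].
  by rewrite (_ : [set w | _] = setT) //; apply/seteqP; split.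
rewrite (_ : [set w | _] = ([set w | Q i w] `&` [set w | (c <= count (fun i => Q i w) l)%N])
   `|` (~` [set w | Q i w] `&` [set w | (c.+1 <= count (fun i => Q i w) l)%N])).
  by apply: measurableU; apply: measurableI => //; apply: measurableC.
apply/seteqP; split => w /=.
  by case: (Q i w) => /= h; [left|right].
by case: (Q i w) => /= -[[h1 h2]|[h1 h2]].
Qed.

Theorem lemma2p1 (R : realType) (dT : measure_display) (T : measurableType dT)
  (P : probability T R) (d n m : nat)
  (XY : T -> obs R d) (Dn : 'I_n -> T -> obs R d)
  (r : d.-tuple R -> R)
  (blk : 'I_m -> 'I_(n %/ m) -> 'I_n)
  (rN : d.-tuple R -> (n %/ m).-tuple (obs R d) -> R)
  (DN : 'I_(n %/ m) -> T -> obs R d) :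
  (1 <= d)%N -> (1 <= m <= n)%N ->
  measurable_fun setT XY ->
  P.-integrable setT (fun w => ((XY w).2 ^+ 2)%:E) ->
  is_regression_function P XY r ->
  iid_copies P Dn XY ->
  (forall j k j' k', blk j k = blk j' k' -> j = j' /\ k = k') ->
  (forall x, measurable_fun setT (rN x)) ->
  iid_copies P DN XY ->
  forall (x : d.-tuple R) (t : R), 0 <= t ->
    fine (P [set w | t <= `| mom rN (fun j w => [tuple Dn (blk j k) w | k < n %/ m]) x w - r x |])
    <= 2 ^+ m * (fine (P [set w | t <= `| rN x [tuple DN k w | k < n %/ m] - r x |])) `^ (m%:R / 2).
Proof.
move=> _ /andP[m1 _] _ _ _ iidZ binj mrN iidW x t t0.
set N := (n %/ m)%N.
pose F (j : 'I_m) w := [tuple Dn (blk j k) w | k < N].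
pose G w := [tuple DN k w | k < N].
have mF j : measurable_fun setT (F j) by apply: mtuple => k; case: iidZ.
have mG : measurable_fun setT G by apply: mtuple => k; case: iidW.
have mpre (f : T -> N.-tuple (obs R d)) D : measurable_fun setT f -> measurable D -> measurable (f @^-1` D).
  by move=> mf mD; rewrite -[X in measurable X]setTI; exact: mf.
pose C := [set z : N.-tuple (obs R d) | t <= `|rN x z - r x|].
have mC : measurable C.
  have -> : C = rN x @^-1` (`]-oo, r x - t]%classic `|` `[r x + t, +oo[%classic).
    apply/seteqP; split => z; rewrite /C /= !in_itv /= ?andbT.
      by rewrite ler_normr => /orP[h|h]; [right|left]; lra.
    by case => h; rewrite ler_normr; apply/orP; [right|left]; lra.
  rewrite -[X in measurable X]setTI; apply: mrN => //.
  by apply: measurableU; exact: measurable_itv.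
pose p := fine (P (G @^-1` C)).
have PGC : P (G @^-1` C) = p%:E by rewrite fineK // fin_num_measure //; exact: mpre.
have p0 : 0 <= p by rewrite fine_ge0 // measure_ge0.
have p1 : p <= 1.
  by rewrite -lee_fin -PGC probability_le1 //; exact: mpre.
pose f j w := rN x (F j w).
have mf j : measurable_fun setT (f j) by apply: measurableT_comp; [exact: mrN|exact: mF].
pose k := uphalf m.
pose q := k.-1.
pose s w := [seq f j w | j <- enum 'I_m].
have ss w : size (s w) = m by rewrite size_map size_enum_ord.
pose M := [set w | t <= `|median (s w) - r x|].
change (fine (P M) <= 2 ^+ m * p `^ (m%:R / 2)).
pose pp1 := fun y : R => r x + t <= y.
pose pp2 := fun y : R => r x - t < y.
have up1 : forall a b, a <= b -> pp1 a -> pp1 b by move=> a b ab; rewrite /pp1 => h; lra.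
have up2 : forall a b, a <= b -> pp2 a -> pp2 b by move=> a b ab; rewrite /pp2 => h; lra.
have cnt_meas (pp : pred R) (mpp : measurable [set y | pp y]) c :
    measurable [set w | (c <= count pp (s w))%N].
  under eq_set do rewrite count_map.
  apply: meas_count => j; rewrite (_ : [set w | _] = f j @^-1` [set y | pp y]) //.
  by rewrite -[X in measurable X]setTI; apply: mf.
have mp1 : measurable [set y : R | pp1 y].
  rewrite (_ : [set y | pp1 y] = `[r x + t, +oo[%classic); first exact: measurable_itv.
  by apply/seteqP; split => y; rewrite /pp1 /= in_itv /= andbT.
have mp2 : measurable [set y : R | pp2 y].
  rewrite (_ : [set y | pp2 y] = `]r x - t, +oo[%classic); first exact: measurable_itv.
  by apply/seteqP; split => y; rewrite /pp2 /= in_itv /= andbT.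
have mu1 w : pp1 (median (s w)) = (m - q <= count pp1 (s w))%N.
  by rewrite (median_up _ _ _ _ up1) ?ss.
have mu2 w : pp2 (median (s w)) = (m - q <= count pp2 (s w))%N.
  by rewrite (median_up _ _ _ _ up2) ?ss.
have Mset : M = [set w | (m - q <= count pp1 (s w))%N] `|` ~` [set w | (m - q <= count pp2 (s w))%N].
  apply/seteqP; split => w; rewrite /M /= -mu1 -mu2 /pp1 /pp2.
    move=> h; have [h1|h2] : r x + t <= median (s w) \/ median (s w) <= r x - t.
      by move: h; rewrite ler_normr => /orP[] h; [left|right]; lra.
      by left.
    by right; apply/negP; rewrite -leNgt.
  case => h; rewrite ler_normr; apply/orP.
    by left; lra.
  by move/negP: h; rewrite -leNgt => h; right; lra.
have mM : measurable M.
  by rewrite Mset; apply: measurableU; [|apply: measurableC]; apply: cnt_meas.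
pose SS := enum {set 'I_m}.
pose n0 := size SS.
have n0E : n0 = (2 ^ m)%N.
  by rewrite /n0 /SS -cardE -cardsT -powersetT card_powerset cardsT card_ord.
pose CS (S : {set 'I_m}) j := if j \in S then C else setT.
have mCS S j : measurable (CS S j) by rewrite /CS; case: ifP.
pose Bi (i : nat) := if (k <= #|nth [set: 'I_m]%SET SS i|)%N
  then \bigcap_(j in [set: 'I_m]) (F j @^-1` CS (nth [set: 'I_m]%SET SS i) j) else set0.
have mB i : measurable (Bi i).
  rewrite /Bi; case: ifP => _ //; apply: fin_bigcap_measurable; first exact: finite_finset.
  by move=> j _; apply: mpre.
have PB i : (P (Bi i) <= (p ^+ k)%:E)%E.
  rewrite /Bi; case: ifPn => hk; last by rewrite measure0 lee_fin exprn_ge0.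
  move: hk; set S := nth _ SS i => hk.
  rewrite (full_indep _ _ _ _ _ _ _ _ _ _ _ _ iidZ iidW binj); last exact: mCS.
  have -> : (\prod_(j < m) P (G @^-1` CS S j) = (\prod_(j < m) (if j \in S then p else 1))%:E)%E.
    rewrite -prodEFin; apply: eq_bigr => j _; rewrite /CS; case: ifP => _ //.
    by rewrite preimage_setT probability_setT.
  by rewrite -big_mkcond prodr_const /= lee_fin; apply: ler_wiXn2l.
have sub : M `<=` \big[setU/set0]_(i < n0) Bi i.
  move=> w Mw; rewrite -bigcup_mkord.
  pose S0 := [set j | t <= `|f j w - r x|]%SET.
  exists (index S0 SS); first by rewrite /= index_mem mem_enum.
  rewrite /Bi nth_index ?mem_enum //.
  have hk : (k <= #|S0|)%N.
    have -> : #|S0| = count (fun y => t <= `|y - r x|) (s w) by rewrite cnt_card [RHS]count_map.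
    move: Mw; rewrite Mset => -[h|h].
      have kq : (k <= m - q)%N by rewrite /q /k uphalfE -divn2; lia.
      have s1 : (count pp1 (s w) <= count (fun y => (t <= `|y - r x|)%R) (s w))%N.
        by apply: sub_count => y; rewrite /pp1 ler_normr => hy; apply/orP; left; lra.
      move: h => /= h; exact: leq_trans kq (leq_trans h s1).
    have cc := count_predC pp2 (s w); rewrite ss in cc.
    have s2 : (count (predC pp2) (s w) <= count (fun y => (t <= `|y - r x|)%R) (s w))%N.
      by apply: sub_count => y /=; rewrite /pp2 -leNgt ler_normr => hy; apply/orP; right; lra.
    have kq : (k = q.+1)%N by rewrite /q /k uphalfE -divn2; lia.
    move: h => /= /negP; rewrite -ltnNge => h; rewrite kq; apply: leq_trans s2; lia.
  rewrite hk => j _ /=; rewrite /CS; case: ifPn => //; rewrite inE => hj.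
  exact: hj.
have PM : (P M <= ((p ^+ k) *+ n0)%:E)%E.
  apply: le_trans (content_subadditive P (fun i _ => mB i) mM sub) _.
  have -> : ((p ^+ k) *+ n0)%:E = (\sum_(i < n0) (p ^+ k)%:E)%E by rewrite sumEFin sumr_const card_ord.
  by apply: lee_sum => i _; exact: PB.
rewrite -lee_fin fineK ?fin_num_measure //; apply: le_trans PM _; rewrite lee_fin n0E.
rewrite -mulr_natl natrX; apply: ler_wpM2l; first exact: exprn_ge0.
rewrite -powR_mulrn //.
have k0 : (0 < k)%N by rewrite /k uphalfE -divn2; lia.
have [->|pn0] := eqVneq p 0.
  rewrite !powR0 //; first by rewrite mulf_neq0 // ?invr_eq0 pnatr_eq0 -lt0n.
  by rewrite pnatr_eq0 -lt0n.
apply: ger_powR; first by rewrite lt_neqAle eq_sym pn0 p0 p1.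
rewrite ler_pdivrMr // -natrM ler_nat /k uphalfE -divn2; lia.
Qed.
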